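(* There are $2^{\mathfrak{c}}$ ideals on $\omega$ that are both meager and null and that are mutually incompatible both in $(\mathfrak{M},\supseteq)$ and in $(\mathfrak{N},\supseteq)$. In particular, neither $(\mathfrak{M},\supseteq)$ nor $(\mathfrak{N},\supseteq)$ has the BT-property.
   Context: All ideals on $\omega$ considered are proper and contain all finite subsets of $\omega$; they are viewed as subsets of the Cantor space $2^\omega=\mathcal{P}(\omega)$. $\mathfrak{M}$ (resp. $\mathfrak{N}$) is the set of ideals that are meager (resp. Lebesgue null) subsets of $2^\omega$, ordered by reverse inclusion; two ideals are compatible in such an ordering if some ideal of the class contains both. An ordering $P$ has the BT-property if it contains a dense subset $D$ that is atomless (every element of $D$ has two incompatible elements of $D$ below it), $\sigma$-closed (every countable decreasing sequence in $D$ has a lower bound in $D$) and satisfies $|D|\leq\mathfrak{c}$. *)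

(* Defs.v *)
From HB Require Import structures.
From mathcomp Require Import all_boot all_order all_algebra.
From mathcomp Require Import all_classical all_reals topology cantor.
Set Implicit Arguments. Unset Strict Implicit. Unset Printing Implicit Defensive.
Import Order.TTheory GRing.Theory Num.Theory.
Local Open Scope classical_set_scope.
Local Open Scope ring_scope.
Local Open Scope card_scope.

(* The Cantor space 2^omega = P(omega): a subset X of omega corresponds to its
   characteristic function. *)
Definition set_of_pt (x : cantor_space) : set nat := [set n | x n = true].

Definition as_cantor (I : set (set nat)) : set cantor_space :=
  [set x | I (set_of_pt x)].

Definition is_ideal (I : set (set nat)) : Prop :=
  [/\ ~ I setT,
      (forall A : set nat, finite_set A -> I A),
      (forall A B : set nat, A `<=` B -> I B -> I A) &
      (forall A B : set nat, I A -> I B -> I (A `|` B))].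

Definition nowhere_dense (T : topologicalType) (A : set T) : Prop :=
  (closure A)° = set0.

Definition meager (T : topologicalType) (A : set T) : Prop :=
  exists N : nat -> set T, (forall n, nowhere_dense (N n)) /\
                           A `<=` \bigcup_n N n.

Definition cylinder (s : seq bool) : set cantor_space :=
  [set x | forall i : nat, (i < size s)%N -> x i = nth false s i].

(* Lebesgue (fair-coin product measure) null subsets of 2^omega: for every
   eps = 1/(k+1) > 0, A is covered by countably many cylinders of total
   measure (sum of 2^-|s_n|) at most eps. *)
Definition null_set (A : set cantor_space) : Prop :=
  forall k : nat, exists s : nat -> seq bool,
    A `<=` \bigcup_n cylinder (s n) /\
    forall N : nat, \sum_(n < N) ((2%:R : rat) ^- size (s n)) <= (k.+1%:R)^-1.

Definition meager_ideals : set (set (set nat)) :=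
  [set I | is_ideal I /\ meager (as_cantor I)].
Definition null_ideals : set (set (set nat)) :=
  [set I | is_ideal I /\ null_set (as_cantor I)].

Definition compatible_in (C : set (set (set nat))) (I J : set (set nat)) : Prop :=
  exists K, C K /\ I `<=` K /\ J `<=` K.

(* BT-property of the ordering (C, reverse inclusion): p <= q iff q `<=` p. *)
Definition BT_property (C : set (set (set nat))) : Prop :=
  exists D : set (set (set nat)),
    [/\ D `<=` C,
        (forall p, C p -> exists2 d, D d & p `<=` d),
        (* atomless *)
        (forall d, D d -> exists d1 d2, [/\ D d1, D d2, d `<=` d1, d `<=` d2 &
                                          ~ compatible_in C d1 d2]),
        (* sigma-closed *)
        (forall s : nat -> set (set nat), (forall n, D (s n)) ->
           (forall n, s n `<=` s n.+1) ->
           exists2 d, D d & forall n, s n `<=` d) &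
        D #<= [set: set nat]].

(* Main.v *)
Require Import Defs.
From HB Require Import structures.
From mathcomp Require Import all_boot all_order all_algebra.
From mathcomp Require Import all_classical all_reals topology cantor.
From mathcomp Require Import zify ring lra.
Set Implicit Arguments. Unset Strict Implicit. Unset Printing Implicit Defensive.
Import Order.TTheory GRing.Theory Num.Theory.
Local Open Scope classical_set_scope.

Definition cyl (x : cantor_space) (K : nat) : set cantor_space :=
  [set z | forall i, (i < K)%N -> z i = x i].

Definition Sx (x : cantor_space) : set_system cantor_space :=
  [set U | exists K, cyl x K `<=` U].

Lemma Sx_filter x : Filter (Sx x).
Proof.
split.
- by exists 0.
- move=> P Q [K1 h1] [K2 h2]; exists (maxn K1 K2) => z hz; split.
  + apply: h1 => i hi; apply: hz; apply: (leq_trans hi); exact: leq_maxl.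
  + apply: h2 => i hi; apply: hz; apply: (leq_trans hi); exact: leq_maxr.
- by move=> P Q PQ [K h]; exists K => z /h /PQ.
Qed.

Lemma nbhs_cyl (x : cantor_space) U : nbhs x U -> exists K, cyl x K `<=` U.
Proof.
have : Sx x --> (x : product_topology_def (fun _ : nat => bool)).
  apply/cvg_sup; first exact: Sx_filter.
  move=> i.
  apply/cvg_image; first exact: Sx_filter.
    apply/seteqP; split => // b _; by exists (fun _ => b).
  move=> B /= hB.
  have Bx : B (x i) by exact: nbhs_singleton hB.
  exists [set z : cantor_space | B (z i)].
    by exists i.+1 => z hz /=; rewrite hz.
  apply/seteqP; split => [b [z hz <-] //|b hb].
  by exists (fun _ => b).
move=> h.
by move=> /h.
Qed.

Lemma nbhs_pt (y : cantor_space) i : nbhs y [set z : cantor_space | z i = y i].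
Proof.
have := @proj_continuous nat (fun _ => bool) i y.
move=> /(_ [set y i]); apply.
exact: discrete_set1.
Qed.

Lemma cyl_nbhs (y : cantor_space) L : nbhs y (cyl y L).
Proof.
elim: L => [|L IH].
  by apply: filterS filterT => z _ i.
apply: filterS (filterI IH (nbhs_pt y L)) => z [h1 h2] i.
rewrite ltnS leq_eqVlt => /orP[/eqP -> //|]; exact: h1.
Qed.

Definition Iq (q : nat) : set nat := [set p | (2^q <= p < 2^q.+1)%N].
Fixpoint bit (j r : nat) : bool := if j is j'.+1 then bit j' r./2 else odd r.
Fixpoint num (s : seq bool) : nat := if s is b :: s' then b + (num s').*2 else 0.
Definition code (X : nat -> bool) l := num (mkseq X l).
Definition Pq (X : nat -> bool) q := bit (logn 2 q + 1 + code X (logn 2 q)) q.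
Definition qk l (b : seq bool) k := 2^l * (num b + 2^(size b) * k).*2.+1.

Lemma Iq_disj q q' p : Iq q p -> Iq q' p -> q = q'.
Proof.
wlog lt : q q' / (q <= q')%N.
  move=> h h1 h2; case: (leqP q q') => hq; first exact: h.
  by apply/esym/h => //; exact: ltnW.
move=> /andP[_ h1] /andP[h2 _]; apply/eqP; rewrite eqn_leq lt /=.
rewrite leqNgt; apply/negP => hlt.
have : (2^q.+1 <= 2^q')%N by rewrite leq_exp2l.
lia.
Qed.

Lemma bit_num b k c : (c < size b)%N -> bit c (num b + 2^(size b) * k) = nth false b c.
Proof.
elim: b c => [//|x b IH] [|c] /= hc.
  by rewrite expnS -mulnA mul2n -addnA -doubleD oddD odd_double addbF; case: x.
rewrite expnS -mulnA mul2n -addnA -doubleD.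
have -> : ((x + (num b + 2 ^ size b * k).*2)./2 = num b + 2 ^ size b * k)%N.
  by rewrite half_bit_double.
exact: IH.
Qed.

Lemma num_lt s : (num s < 2^(size s))%N.
Proof. elim: s => [//|x s IH] /=; rewrite expnS; case: x => /=; lia. Qed.

Lemma num_inj s t : size s = size t -> num s = num t -> s = t.
Proof.
elim: s t => [|x s IH] [|y t] //= [hs] h.
have hx : x = y by move: (congr1 odd h); rewrite !oddD !odd_double !addbF; clear; case: x; case: y.
subst y; congr (_ :: _); apply: IH => //.
by move/eqP: h; rewrite eqn_add2l => /eqP /(congr1 half); rewrite !doubleK.
Qed.

Lemma bit_shift l j m : bit (l + j) (2^l * m) = bit j m.
Proof.
elim: l m => [|l IH] m; first by rewrite add0n mul1n.
by rewrite addSn /= expnS -mulnA mul2n doubleK.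
Qed.

Lemma logn_qk l b k : logn 2 (qk l b k) = l.
Proof.
rewrite /qk lognM ?expn_gt0 // lognX logn_prime // eqxx muln1.
by rewrite logn_coprime ?addn0 // coprime2n /= odd_double.
Qed.

Lemma Pq_qk X l b k : (code X l < size b)%N -> Pq X (qk l b k) = nth false b (code X l).
Proof.
move=> h; rewrite /Pq logn_qk /qk -addnA bit_shift addnC addn1 /=.
by rewrite uphalf_double bit_num.
Qed.

Lemma code_lt X l : (code X l < 2^l)%N.
Proof. by have := num_lt (mkseq X l); rewrite size_mkseq. Qed.

Lemma qk_ge l b k : (k <= qk l b k)%N.
Proof.
rewrite /qk; have h1 : (0 < 2^l)%N by rewrite expn_gt0.
have h2 : (0 < 2^(size b))%N by rewrite expn_gt0.
set r := num b + 2 ^ size b * k.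
have hk : (k <= r)%N by rewrite /r; apply: (leq_trans _ (leq_addl _ _)); apply: leq_pmull.
apply: (leq_trans hk); apply: (leq_trans _ (leq_pmull _ h1)).
by rewrite -addnn; lia.
Qed.

Lemma qkS l b k : qk l b k = qk l b 0 + k * (2^l * 2^(size b) * 2).
Proof. rewrite /qk -!mul2n; ring. Qed.


Lemma bound_fin m (Q : nat -> nat -> Prop) :
  (forall i, (i < m)%N -> exists k, forall l, (k <= l)%N -> Q i l) ->
  exists k, forall l, (k <= l)%N -> forall i, (i < m)%N -> Q i l.
Proof.
elim: m => [|m IH] h; first by exists 0.
have [k1 hk1] : exists k, forall l, (k <= l)%N -> forall i, (i < m)%N -> Q i l.
  by apply: IH => i hi; apply: h; exact: ltnW.
have [k2 hk2] := h m (ltnSn m).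
exists (maxn k1 k2) => l hl i; rewrite ltnS leq_eqVlt => /orP[/eqP ->|hi].
  by apply: hk2; apply: leq_trans hl; exact: leq_maxr.
by apply: hk1 => //; apply: leq_trans hl; exact: leq_maxl.
Qed.

Lemma sep2 (X Y : nat -> bool) : exists k, forall l, (k <= l)%N -> code X l = code Y l -> X = Y.
Proof.
have [->|] := pselect (X = Y); first by exists 0.
move=> /boolp.funeqP; rewrite -existsNE => -[i hi].
exists i.+1 => l hl /num_inj; rewrite !size_mkseq => /(_ erefl) /(congr1 (nth false ^~ i)).
by rewrite !nth_mkseq // => h; exfalso.
Qed.

Lemma sep m (Xs : nat -> nat -> bool) : exists k, forall l, (k <= l)%N ->
  forall i, (i < m)%N -> forall j, (j < m)%N -> code (Xs i) l = code (Xs j) l -> Xs i = Xs j.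
Proof.
apply: bound_fin => i hi.
have [k hk] := @bound_fin m (fun j l => code (Xs i) l = code (Xs j) l -> Xs i = Xs j)
  (fun j _ => sep2 (Xs i) (Xs j)).
by exists k => l hl j hj; apply: hk.
Qed.

Definition x1 (X : nat -> bool) : set nat := [set p | exists q, Iq q p /\ Pq X q].
Definition gen (f : (nat -> bool) -> bool) X : set nat :=
  if f X then ~` x1 X else x1 X.
Definition Idl (f : (nat -> bool) -> bool) : set (set nat) :=
  [set A | exists m (Xs : nat -> nat -> bool) N, forall p, (N <= p)%N -> A p ->
     exists2 i, (i < m)%N & gen f (Xs i) p].

Definition patb f m (Xs : nat -> nat -> bool) l : seq bool :=
  mkseq (fun c => `[< exists i, (i < m)%N /\ code (Xs i) l = c /\ f (Xs i) >]) (2^l).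

Lemma Idl_miss f A m Xs N l k :
  (forall p, (N <= p)%N -> A p -> exists2 i, (i < m)%N & gen f (Xs i) p) ->
  (forall i, (i < m)%N -> forall j, (j < m)%N -> code (Xs i) l = code (Xs j) l -> Xs i = Xs j) ->
  (N <= qk l (patb f m Xs l) k)%N ->
  forall p, Iq (qk l (patb f m Xs l) k) p -> ~ A p.
Proof.
set q := qk _ _ _ => hA hsep hN p hp Ap.
have hpN : (N <= p)%N.
  apply: (leq_trans hN); case/andP: hp => hp _; apply: leq_trans hp.
  exact/ltnW/ltn_expl.
have [i hi hg] := hA p hpN Ap.
have hP : Pq (Xs i) q = f (Xs i).
  rewrite /q Pq_qk; last by rewrite size_mkseq; exact: code_lt.
  rewrite nth_mkseq; last exact: code_lt.
  apply/asboolP/idP => [[j [hj [hc hf]]]|hf]; last by exists i.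
  by rewrite -(hsep _ hj _ hi hc).
move: hg; rewrite /gen; case: ifP => hf.
  by apply; exists q; split => //; rewrite hP.
move=> [q' [hq' hP']]; have eq' := Iq_disj hq' hp.
by move: hP'; rewrite eq' hP hf.
Qed.

Lemma seq_bound (s : seq nat) : exists N, forall x, x \in s -> (x < N)%N.
Proof.
elim: s => [|a s [N hN]]; first by exists 0.
exists (maxn a.+1 N) => x; rewrite inE => /orP[/eqP ->|/hN h].
  exact: leq_maxl.
by apply: leq_trans h _; exact: leq_maxr.
Qed.

Lemma finite_bound (A : set nat) : finite_set A -> exists N, forall p, A p -> (p < N)%N.
Proof.
move=> /finite_seqP [s ->]; have [N hN] := seq_bound s.
by exists N => p /= hp; apply: hN.
Qed.

Lemma Idl_proper f : ~ Idl f setT.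
Proof.
move=> [m [Xs [N hA]]].
have [l0 hl0] := sep m Xs.
have hq := qk_ge l0 (patb f m Xs l0) N.
apply: (Idl_miss hA (hl0 _ (leqnn _)) hq (p := 2 ^ qk l0 (patb f m Xs l0) N)) => //.
by rewrite /Iq /= leqnn /= ltn_exp2l.
Qed.

Lemma Idl_ideal f : is_ideal (Idl f).
Proof.
split.
- exact: Idl_proper.
- move=> A /finite_bound [N hN]; exists 0, (fun _ _ => false), N => p hp /hN.
  by rewrite ltnNge hp.
- move=> A B AB [m [Xs [N h]]]; exists m, Xs, N => p hp /AB; exact: h.
- move=> A B [m [Xs [N h]]] [m' [Xs' [N' h']]].
  exists (m + m'), (fun i => if (i < m)%N then Xs i else Xs' (i - m)), (maxn N N').
  move=> p hp [Ap|Bp].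
    have [i hi hg] := h p (leq_trans (leq_maxl _ _) hp) Ap.
    by exists i; [exact: ltn_addr|rewrite hi].
  have [i hi hg] := h' p (leq_trans (leq_maxr _ _) hp) Bp.
  exists (m + i); first by rewrite ltn_add2l.
  by rewrite ltnNge leq_addr /= addKn.
Qed.

Lemma gen_in f X : Idl f (gen f X).
Proof. by exists 1, (fun _ => X), 0 => p _ h; exists 0. Qed.

Lemma Idl_incompat (C : set (set (set nat))) f g X :
  (forall K, C K -> is_ideal K) -> f X <> g X -> ~ compatible_in C (Idl f) (Idl g).
Proof.
move=> hC hfg [K [/hC [hp _ _ hU] [hf hg]]]; apply: hp.
have := hU _ _ (hf _ (gen_in f X)) (hg _ (gen_in g X)).
suff -> : gen f X `|` gen g X = setT by [].
apply/seteqP; split => // p _; rewrite /gen.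
case: (f X) hfg; case: (g X) => // _.
- by have [h|h] := pselect (x1 X p); [right|left].
- by have [h|h] := pselect (x1 X p); [left|right].
Qed.

Definition G n := 2^n * 2^(2^n) * 2.
Definition Z n : set cantor_space := [set x | forall j, (n <= j)%N ->
  exists q, (j <= q <= j + G n)%N /\ forall p, Iq q p -> x p = false].

Lemma G_mono l n : (l <= n)%N -> (G l <= G n)%N.
Proof.
move=> h; rewrite /G leq_mul2r /=; apply: leq_mul; rewrite leq_exp2l //.
by rewrite leq_exp2l.
Qed.

Lemma Idl_Z f x : Idl f (set_of_pt x) -> exists n, Z n x.
Proof.
move=> [m [Xs [N hA]]].
have [l hl] := sep m Xs.
set b := patb f m Xs l.
set q0 := qk l b 0.
set D := 2 ^ l * 2 ^ size b * 2.
have hD : size b = 2 ^ l by rewrite size_mkseq.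
have D0 : (0 < D)%N by rewrite /D !muln_gt0 !expn_gt0.
have DG : (D <= G (maxn l (maxn N q0)))%N.
  by rewrite /D hD; apply: G_mono; exact: leq_maxl.
exists (maxn l (maxn N q0)) => j hj.
have hjN : (N <= j)%N by apply: leq_trans hj; rewrite leq_max leq_maxl orbT.
have hjq : (q0 <= j)%N by apply: leq_trans hj; rewrite !leq_max leqnn !orbT.
set t := (j - q0) %/ D.
exists (qk l b t.+1).
have he := divn_eq (j - q0) D.
have hr := ltn_pmod (j - q0) D0.
have hq : qk l b t.+1 = q0 + t * D + D by rewrite qkS -/q0 -/D mulSn; lia.
split.
  rewrite hq; move: he hr DG; rewrite -/t; set r := (j - q0) %% D; lia.
move=> p hp; apply/negbTE/negP => xp.
apply: (Idl_miss hA (hl _ (leqnn _)) _ hp) => //.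
rewrite hq; move: he; rewrite -/t; set r := (j - q0) %% D; lia.
Qed.

Lemma Z_nd n : nowhere_dense (Z n).
Proof.
rewrite /nowhere_dense; apply/seteqP; split => // x hx.
have [K hK] := nbhs_cyl hx.
pose y : cantor_space := fun i => if (i < K)%N then x i else true.
have cy : closure (Z n) y by apply: hK => i hi; rewrite /y hi.
pose j := maxn n K.
have [z [zZ zc]] := cy _ (cyl_nbhs y (2 ^ (j + G n).+1)).
have [q [/andP [h1 h2] hq]] := zZ j (leq_maxl _ _).
have := hq (2^q); rewrite /Iq /= leqnn ltn_exp2l // ltnSn => /(_ isT).
rewrite zc; last by rewrite ltn_exp2l.
rewrite /y; case: ifP => // hK'; exfalso.
have : (q < 2 ^ q)%N by exact: ltn_expl.
have : (K <= j)%N by exact: leq_maxr.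
lia.
Qed.

Fixpoint strs n : seq (seq bool) :=
  if n is n'.+1 then [seq false :: w | w <- strs n'] ++ [seq true :: w | w <- strs n']
  else [:: [::]].

Lemma size_strs n : size (strs n) = 2^n.
Proof. by elim: n => //= n IH; rewrite size_cat !size_map IH expnS mul2n addnn. Qed.

Lemma strs_size n w : w \in strs n -> size w = n.
Proof.
elim: n w => [|n IH] w /=; first by rewrite inE => /eqP ->.
by rewrite mem_cat => /orP[] /mapP [w' /IH h ->] /=; rewrite h.
Qed.

Lemma strs_pref n (x : nat -> bool) :
  exists2 w, w \in strs n & forall i, (i < n)%N -> nth false w i = x i.
Proof.
elim: n x => [|n IH] x; first by exists [::].
have [w hw hx] := IH (fun i => x i.+1).
exists (x 0 :: w).
  by rewrite /= mem_cat; case: (x 0); rewrite map_f ?orbT.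
by move=> [|i] //= hi; apply: hx.
Qed.

Definition Cq q := [seq w ++ nseq (2^q) false | w <- strs (2^q)].

Lemma Cq_cover q (x : cantor_space) : (forall p, Iq q p -> x p = false) ->
  exists2 w, w \in Cq q & cylinder w x.
Proof.
move=> hx; have [w hw hwx] := strs_pref (2^q) x.
exists (w ++ nseq (2^q) false); first exact: map_f.
move=> i; rewrite size_cat size_nseq (strs_size hw) => hi.
rewrite nth_cat (strs_size hw); case: ifP => h; first by rewrite hwx.
rewrite nth_nseq if_same; apply: hx.
by rewrite /Iq /= expnS mul2n -addnn leqNgt h hi.
Qed.

Lemma Cq_size q : (0 < size (Cq q))%N.
Proof. by rewrite size_map size_strs expn_gt0. Qed.

Section Rat.
Local Open Scope ring_scope.

Definition wt (w : seq bool) : rat := (2%:R : rat) ^- size w.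

Lemma wt_ge0 w : 0 <= wt w.
Proof. by rewrite /wt invr_ge0 exprn_ge0. Qed.

Lemma sum_const_size (s : seq (seq bool)) n : (forall w, w \in s -> size w = n) ->
  \sum_(w <- s) wt w = (size s)%:R * (2%:R : rat) ^- n.
Proof.
elim: s => [|a s IH] h; first by rewrite big_nil mul0r.
rewrite big_cons IH; last by move=> w hw; apply: h; rewrite inE hw orbT.
by rewrite /wt h ?mem_head // /= [in RHS]mulrS mulrDl mul1r.
Qed.

Lemma Cq_wt q : \sum_(w <- Cq q) wt w = (2%:R : rat) ^- (2^q).
Proof.
rewrite (@sum_const_size _ (2^q + 2^q)%N).
  rewrite size_map size_strs natrX exprD invfM mulrA divff ?mul1r //.
  by rewrite expf_neq0 // pnatr_eq0.
move=> w /mapP [w' hw' ->]; by rewrite size_cat size_nseq (strs_size hw').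
Qed.
End Rat.

Definition fl (C : nat -> seq (seq bool)) M := flatten [seq C n | n <- iota 0 M].
Definition sq C m := nth [::] (fl C m.+1) m.

Lemma fl_split C a b : (a <= b)%N -> exists r, fl C b = fl C a ++ r.
Proof.
move=> h; exists (flatten [seq C n | n <- iota a (b - a)]).
by rewrite /fl -flatten_cat -map_cat -iotaD subnKC.
Qed.

Lemma fl_S C n : fl C n.+1 = fl C n ++ C n.
Proof. by rewrite /fl -addn1 iotaD map_cat flatten_cat /= cats0. Qed.

Lemma fl_size C M : (forall n, 0 < size (C n))%N -> (M <= size (fl C M))%N.
Proof.
move=> hC; elim: M => // M IH; rewrite fl_S size_cat.
by have := hC M; lia.
Qed.

Lemma sq_nth C M m : (forall n, 0 < size (C n))%N -> (m < M)%N ->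
  sq C m = nth [::] (fl C M) m.
Proof.
move=> hC hm; have [r ->] := fl_split C hm.
by rewrite nth_cat; have := fl_size m.+1 hC; rewrite /sq => ->.
Qed.

Lemma sq_cover C n w : (forall n, 0 < size (C n))%N -> w \in C n -> exists m, sq C m = w.
Proof.
move=> hC hw; exists (size (fl C n) + index w (C n))%N.
have hn := fl_size n hC.
have hi : (index w (C n) < size (C n))%N by rewrite index_mem.
rewrite (@sq_nth C (size (fl C n) + index w (C n)).+1) //.
have hle : (n.+1 <= (size (fl C n) + index w (C n)).+1)%N by rewrite ltnS; apply: leq_trans hn (leq_addr _ _).
have [r ->] := fl_split C hle.
rewrite fl_S -catA nth_cat ltnNge leq_addr /= addKn nth_cat hi.
exact: nth_index.
Qed.

Section Rat2.
Local Open Scope ring_scope.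

Lemma nth_sum_le (l : seq (seq bool)) M : (M <= size l)%N ->
  \sum_(m < M) wt (nth [::] l m) <= \sum_(w <- l) wt w.
Proof.
elim: l M => [|a l IH] [|M] //= h.
- by rewrite big_ord0 big_nil.
- by rewrite big_ord0 big_cons; apply: addr_ge0; [exact: wt_ge0| apply: sumr_ge0 => i _; exact: wt_ge0].
- rewrite big_ord_recl big_cons /=; apply: lerD => //.
  exact: IH.
Qed.

Lemma sq_sum C M : (forall n, 0 < size (C n))%N ->
  \sum_(m < M) wt (sq C m) <= \sum_(n < M) \sum_(w <- C n) wt w.
Proof.
move=> hC.
have -> : \sum_(m < M) wt (sq C m) = \sum_(m < M) wt (nth [::] (fl C M) m).
  by apply: eq_bigr => i _; rewrite (sq_nth (M := M)).
apply: le_trans (nth_sum_le (fl_size M hC)) _.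
by rewrite /fl big_flatten big_map /= -{1}(subn0 M) big_mkord.
Qed.
End Rat2.

Section Rat3.
Local Open Scope ring_scope.

Lemma invpow_le a b : (b <= a)%N -> (2%:R : rat) ^- a <= (2%:R) ^- b.
Proof.
move=> h; rewrite lef_pV2 ?posrE ?exprn_gt0 // -!natrX ler_nat leq_exp2l //.
Qed.

Lemma geom J M : \sum_(n < M) (2%:R : rat) ^- (J + n).+1 = 2 ^- J * (1 - 2 ^- M).
Proof.
elim: M => [|M IH]; first by rewrite big_ord0 expr0 invr1 subrr mulr0.
rewrite big_ord_recr /= IH -addnS exprD !exprS.
set a := (2%:R : rat) ^+ J; set b := (2%:R : rat) ^+ M.
have a0 : a != 0 by rewrite expf_neq0 // pnatr_eq0.
have b0 : b != 0 by rewrite expf_neq0 // pnatr_eq0.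
by field; rewrite a0 b0.
Qed.

Lemma tail_bound J M : \sum_(n < M) (2%:R : rat) ^- (2 ^ (J + n)) <= 2 ^- J.
Proof.
apply: le_trans (_ : \sum_(n < M) (2%:R : rat) ^- (J + n).+1 <= _).
  by apply: ler_sum => i _; apply: invpow_le; exact: ltn_expl.
rewrite geom ger_pMr ?invr_gt0 ?exprn_gt0 // lerBlDr lerDl.
by rewrite invr_ge0 exprn_ge0.
Qed.
End Rat3.

Lemma Idl_null f : null_set (as_cantor (Idl f)).
Proof.
move=> k.
pose C n := Cq (k + n).
have hC : forall n, (0 < size (C n))%N by move=> n'; exact: Cq_size.
exists (sq C); split.
  move=> x /Idl_Z [n hZ].
  have [q [/andP[h1 h2] hq]] := hZ (maxn n k) (leq_maxl _ _).
  have hkq : (k <= q)%N by apply: leq_trans h1; exact: leq_maxr.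
  have [w hw hc] := Cq_cover hq.
  have hw' : w \in C (q - k) by rewrite /C subnKC.
  have [m hm] := sq_cover hC hw'.
  by exists m => //; rewrite hm.
move=> M; apply: le_trans (sq_sum M hC) _.
apply: (@le_trans _ _ (\sum_(n < M) (2%:R : rat) ^- (2 ^ (k + n)))%R).
  by apply: ler_sum => i _; rewrite /C Cq_wt.
apply: le_trans (tail_bound k M) _.
rewrite lef_pV2 ?posrE ?exprn_gt0 ?ltr0n // -natrX ler_nat.
exact: ltn_expl.
Qed.

Lemma Idl_meager f : meager (as_cantor (Idl f)).
Proof.
exists Z; split; first exact: Z_nd.
by move=> x /Idl_Z [n h]; exists n.
Qed.

Lemma no_inj (k : set (set nat) -> set nat) : ~ injective k.
Proof.
move=> hk.
pose S0 : set (set nat) := [set a | exists S, k S = a /\ ~ S a].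
have [h|h] := pselect (S0 (k S0)).
  by move: (h) => [S [/hk eS]]; rewrite eS.
by apply: (h); exists S0; split.
Qed.

Definition fT (T : set (set nat)) : (nat -> bool) -> bool := fun X => `[< T (set_of_pt X) >].
Definition gI T := Idl (fT T).

Lemma fT_neq T T' : T <> T' -> exists X, fT T X <> fT T' X.
Proof.
move=> hne; apply: contrapT => hall; apply: hne.
apply/funext => Y; apply/propext.
pose X : nat -> bool := fun n => `[< Y n >].
have eX : set_of_pt X = Y.
  by apply/funext => n; apply/propext; rewrite /set_of_pt /X /=; split => [/asboolP|/asboolP].
have : fT T X = fT T' X by apply: contrapT => h; apply: hall; exists X.
rewrite /fT eX => e; split => h.
  by apply/asboolP; rewrite -e; apply/asboolP.
by apply/asboolP; rewrite e; apply/asboolP.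
Qed.

Lemma gI_inj : injective gI.
Proof.
move=> T T' e; apply: contrapT => /fT_neq [X hX].
apply: (@Idl_incompat is_ideal (fT T) (fT T') X) => //.
by exists (gI T); split; [exact: Idl_ideal|split => //; change (gI T' `<=` gI T); rewrite e].
Qed.

Lemma noBT (C : set (set (set nat))) : (forall T, C (gI T)) ->
  (forall K, C K -> is_ideal K) -> ~ BT_property C.
Proof.
move=> hg hC [D [DC dense _ _ card]].
have /pcard_injP [h hinj] := card.
have hex : forall T, exists d, D d /\ gI T `<=` d.
  by move=> T; have [d hd hs] := dense _ (hg T); exists d.
have [phi hphi] := choice hex.
apply: (@no_inj (fun T => h (phi T))) => T T' e.
have ep : phi T = phi T'.
  by apply: hinj => //; rewrite inE; [exact: (hphi T).1|exact: (hphi T').1].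
apply: contrapT => /fT_neq [X hX].
apply: (@Idl_incompat C (fT T) (fT T') X) => //.
exists (phi T); split; first exact: DC (hphi T).1.
by split; [exact: (hphi T).2|rewrite ep; exact: (hphi T').2].
Qed.

Local Open Scope card_scope.

Theorem mainTheorem9 :
  (exists F : set (set (set nat)),
     F #= [set: set (set nat)] /\
     (forall I, F I -> meager_ideals I /\ null_ideals I) /\
     (forall I J, F I -> F J -> I <> J ->
        ~ compatible_in meager_ideals I J /\ ~ compatible_in null_ideals I J))
  /\ ~ BT_property meager_ideals /\ ~ BT_property null_ideals.
Proof.
split.
  exists (gI @` [set: set (set nat)]); split; [|split].
  - by apply: inj_card_eq => T T' _ _; exact: gI_inj.
  - move=> I [T _ <-]; split; split; [exact: Idl_ideal|exact: Idl_meager|exact: Idl_ideal|exact: Idl_null].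
  - move=> I J [T _ <-] [T' _ <-] hne.
    have hT : T <> T' by move=> e; apply: hne; rewrite e.
    have [X hX] := fT_neq hT.
    by split; apply: (@Idl_incompat _ (fT T) (fT T') X) => // K [hK _].
split.
  apply: noBT; last by move=> K [hK _].
  by move=> T; split; [exact: Idl_ideal|exact: Idl_meager].
apply: noBT; last by move=> K [hK _].
by move=> T; split; [exact: Idl_ideal|exact: Idl_null].
Qed.
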